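(* Let $X,Y$ be a section-pair with $m\ge 2$ chords. Then there is a parallel collection of subsection pairs $X_1,Y_1;\dots;X_t,Y_t$ such that $\sum_{i=1}^t e(X_i,Y_i)\ge m/24$ and one of the following holds: (1) for every $i$, there is a vertex of $X_i\cup Y_i$ incident to at least $\frac{e(X_i,Y_i)}{6\log m}$ chords of $E(X_i,Y_i)$; (2) for every $i$, there is a chord in $E(X_i,Y_i)$ which interlaces at least $\frac{e(X_i,Y_i)}{6\log m}$ of the chords in $E(X_i,Y_i)$.
   Context: Logarithms are base 2. A section-pair in a graph $G$ is a pair $X,Y$ of vertex-disjoint paths; the two endpoints of $X$ are designated its top $x^{t}$ and bottom $x^{b}$, and those of $Y$ its top $y^t$ and bottom $y^b$. For distinct $x_1,x_2\in X$, $x_1$ is above $x_2$ if $x_1$ is closer to $x^t$ along $X$ than $x_2$, otherwise below; similarly in $Y$. For vertex sets $A,B\subseteq X$ (or $\subseteq Y$), $A$ is above (resp. below) $B$ if every vertex of $A$ is above (resp. below) every vertex of $B$. A chord is an edge of $G$ with one endpoint in $X$ and one in $Y$. Two chords $(x_1,y_1),(x_2,y_2)$ ($x_i\in X,y_i\in Y$) with no common vertex are parallel if for some $i\in\{1,2\}$, $x_i$ is above $x_{3-i}$ and $y_i$ is above $y_{3-i}$; otherwise they are interlacing (a chord interlaces another). A subsection pair of $X,Y$ is a section-pair $X',Y'$ where $X'$ is a subpath of $X$ and $Y'$ a subpath of $Y$ (tops being the endpoints closer to $x^t$, resp. $y^t$); $E(X',Y')$ is the set of chords with one endpoint in $X'$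 and one in $Y'$, and $e(X',Y')=|E(X',Y')|$. A collection $X_1,Y_1;\dots;X_t,Y_t$ of subsection pairs, with the $X_i$ pairwise vertex-disjoint and the $Y_i$ pairwise vertex-disjoint, labeled so that $X_i$ is below $X_j$ for all $i<j$, is parallel if also $Y_i$ is below $Y_j$ for all $i<j$. *)

(* Defs.v *)
From mathcomp Require Import all_boot.
From Stdlib Require Import Reals.

Set Implicit Arguments.
Unset Strict Implicit.
Unset Printing Implicit Defensive.

(* A path of the graph, given as the sequence of its vertices from its top
   (head of the sequence) to its bottom (last element): nonempty, no repeated
   vertex, consecutive vertices adjacent. *)
Definition is_path (T : eqType) (e : rel T) (s : seq T) : bool :=
  if s is x :: p then path e x p && uniq s else false.

Definition above (T : eqType) (X : seq T) (a b : T) : bool :=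
  [&& a \in X, b \in X & index a X < index b X].

Definition chords (T : finType) (e : rel T) (X' Y' : seq T) : {set T * T} :=
  [set c : T * T | [&& c.1 \in X', c.2 \in Y' & e c.1 c.2]].

Definition parallel_chords (T : eqType) (X Y : seq T) (c d : T * T) : bool :=
  [&& c.1 != d.1, c.2 != d.2 &
      (above X c.1 d.1 && above Y c.2 d.2) || (above X d.1 c.1 && above Y d.2 c.2)].

Definition interlace (T : eqType) (X Y : seq T) (c d : T * T) : bool :=
  [&& c.1 != d.1, c.2 != d.2 & ~~ parallel_chords X Y c d].

Definition below_in (T : eqType) (X : seq T) (A B : seq T) : bool :=
  all (fun a => all (fun b => above X b a) B) A.

Definition subsection (T : eqType) (X X' : seq T) : bool :=
  (X' != [::]) && infix X' X.

(* A parallel collection X_1,Y_1; ...; X_t,Y_t of subsection pairs of X, Y,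
   given as the sequence [:: (X_1,Y_1); ...; (X_t,Y_t)] (index i-1 <-> i). *)
Definition parallel_collection (T : finType) (X Y : seq T)
    (s : seq (seq T * seq T)) : Prop :=
  (forall i, i < size s ->
     subsection X (nth ([::], [::]) s i).1 /\ subsection Y (nth ([::], [::]) s i).2) /\
  (forall i j, i < j -> j < size s ->
     [/\ [disjoint (nth ([::], [::]) s i).1 & (nth ([::], [::]) s j).1],
         [disjoint (nth ([::], [::]) s i).2 & (nth ([::], [::]) s j).2],
         below_in X (nth ([::], [::]) s i).1 (nth ([::], [::]) s j).1 &
         below_in Y (nth ([::], [::]) s i).2 (nth ([::], [::]) s j).2]).

Definition log2 (x : R) : R := (ln x / ln 2)%R.

(* Main.v *)
Require Import Defs.
From mathcomp Require Import all_boot zify.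
From Stdlib Require Import Reals Lra Classical.

Set Implicit Arguments.
Unset Strict Implicit.
Unset Printing Implicit Defensive.

Lemma cardU_le (T : finType) (A B : {set T}) : #|A :|: B| <= #|A| + #|B|.
Proof. rewrite cardsU; exact: leq_subr. Qed.

Lemma pow_le1 (x : R) k : (0 <= x <= 1)%R -> (x ^ k <= 1)%R.
Proof.
move=> [H0 H1]; elim: k => [|k IH] /=; first lra.
have := pow_le x k H0; nra.
Qed.

Notation Box := ((nat * nat) * (nat * nat))%type.

Section Abs.
Variables (T : finType) (C : {set T * T}) (fx fy : T -> nat) (th : R).
Hypothesis th3 : (3 <= th)%R.

Definition x1 (b : Box) := b.1.1.
Definition x2 (b : Box) := b.1.2.
Definition y1 (b : Box) := b.2.1.
Definition y2 (b : Box) := b.2.2.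

Definition inbox (b : Box) (c : T * T) :=
  [&& x1 b <= fx c.1, fx c.1 < x2 b, y1 b <= fy c.2 & fy c.2 < y2 b].
Definition Bset (b : Box) := [set c in C | inbox b c].

Definition opp (c d : T * T) :=
  ((fx c.1 < fx d.1) && (fy d.2 < fy c.2)) || ((fx d.1 < fx c.1) && (fy c.2 < fy d.2)).

Definition good1 (S : {set T * T}) := exists c, c \in S /\
  ((INR #|[set d in S | fx d.1 == fx c.1]| >= INR #|S| / th)%R \/
   (INR #|[set d in S | fy d.2 == fy c.2]| >= INR #|S| / th)%R).
Definition good2 (S : {set T * T}) := exists c, c \in S /\
  (INR #|[set d in S | opp c d]| >= INR #|S| / th)%R.

Definition subbox (b b' : Box) :=
  [/\ x1 b <= x1 b', x2 b' <= x2 b, y1 b <= y1 b' & y2 b' <= y2 b].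
Definition sep (b b' : Box) := (x2 b <= x1 b') && (y2 b <= y1 b').

Definition result (bx : Box) k (L : seq Box) :=
  [/\ forall b, b \in L -> [/\ subbox bx b, 0 < #|Bset b| & good1 (Bset b) \/ good2 (Bset b)],
      pairwise sep L &
      (INR (\sum_(b <- L) #|Bset b|) >= INR #|Bset bx| * (1 - 3 / th) ^ k)%R].

Lemma inboxE b c : inbox b c =
  [&& x1 b <= fx c.1, fx c.1 < x2 b, y1 b <= fy c.2 & fy c.2 < y2 b].
Proof. by []. Qed.
Lemma mkE (a b c d : nat) : (x1 ((a, b), (c, d)) = a) * (x2 ((a, b), (c, d)) = b) *
  (y1 ((a, b), (c, d)) = c) * (y2 ((a, b), (c, d)) = d).
Proof. by []. Qed.

Lemma th_pos : (0 < th)%R. Proof. lra. Qed.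

Lemma inv_th : (0 < / th)%R /\ (th * / th = 1)%R.
Proof. have h := th_pos; split; [exact: Rinv_0_lt_compat | field; lra]. Qed.

Lemma q_bounds : (0 <= 1 - 3 / th <= 1)%R.
Proof.
have [h1 h2] := inv_th. rewrite /Rdiv. nra.
Qed.

Lemma easy_case bx k : (#|Bset bx| = 0 \/ good1 (Bset bx) \/ good2 (Bset bx)) ->
  exists L, result bx k L.
Proof.
case=> [H0|Hg].
  exists [::]; split => //; rewrite big_nil H0 /=; lra.
have Hn : 0 < #|Bset bx|.
  case: Hg => -[c [cS _]]; apply/card_gt0P; by exists c.
exists [:: bx]; split => //.
- move=> b; rewrite inE => /eqP ->; split => //.
- rewrite big_seq1. have := pow_le1 k q_bounds. have := pow_le _ k (proj1 q_bounds).
  have := pos_INR #|Bset bx|. nra.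
Qed.

Lemma ng_ge2 S : ~ good1 S -> 0 < #|S| -> 2 <= #|S|.
Proof.
move=> Hng Hn; rewrite ltnNge; apply/negP => Hle.
have e1 : #|S| = 1 by apply/eqP; rewrite eqn_leq Hn andbT; exact: Hle.
case/card_gt0P: Hn => c cS; apply: Hng; exists c; split => //; left.
have h1 : 1 <= #|[set d in S | fx d.1 == fx c.1]|.
  apply/card_gt0P; exists c; by rewrite inE cS eqxx.
rewrite e1; apply: Rle_ge. have := th_pos.
have : (1 <= INR #|[set d in S | fx d.1 == fx c.1]|)%R by apply: (le_INR 1); apply/leP.
move=> h2 _. have [h3 h4] := inv_th. rewrite /Rdiv. have -> : INR 1 = 1%R by []. nra.
Qed.


Lemma fin_step (n t1 t2 s1 s2 r c tr Q : R) : (0 <= Q)%R -> (s1 >= t1 * Q)%R -> (s2 >= t2 * Q)%R ->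
  (n <= t1 + t2 + r + c + tr)%R -> (r <= n / th)%R -> (c <= n / th)%R -> (tr <= n / th)%R ->
  (s1 + s2 >= n * ((1 - 3 / th) * Q))%R.
Proof.
move=> HQ H1 H2 HN Hr Hc Htr.
have [hu hu1] := inv_th.
have E : (n * ((1 - 3 / th) * Q) = (n - 3 * (n / th)) * Q)%R by rewrite /Rdiv; ring.
rewrite E.
have : (0 <= (t1 + t2 - (n - 3 * (n / th))) * Q)%R by apply: Rmult_le_pos => //; lra.
nra.
Qed.

Lemma INR_le_card (A B : {set T * T}) : A \subset B -> (INR #|A| <= INR #|B|)%R.
Proof. move=> h; apply: le_INR; apply/leP; exact: subset_leq_card. Qed.

Lemma rec_main k : forall bx, #|Bset bx| < expn 2 k.+1 -> exists L, result bx k L.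
Proof.
elim: k => [|k IH] bx Hn;
  (case: (classic (#|Bset bx| = 0 \/ good1 (Bset bx) \/ good2 (Bset bx))) => [H|H];
   first exact: easy_case);
  (have Hpos : 0 < #|Bset bx| by rewrite lt0n; apply/eqP => h; apply: H; left);
  (have Hng1 : ~ good1 (Bset bx) by tauto);
  (have Hng2 : ~ good2 (Bset bx) by tauto);
  have H2 := ng_ge2 Hng1 Hpos.
  by move: Hn H2; rewrite expnS expn0; lia.
have inS : forall c, (c \in Bset bx) = (c \in C) && inbox bx c by move=> c; rewrite inE.
have [S eS] : {S | S = Bset bx} by exists (Bset bx).
rewrite -eS in Hpos Hn Hng1 Hng2 H2 inS.
set n := #|S|.
have rowB : forall c, c \in S -> (INR #|[set d in S | fx d.1 == fx c.1]| < INR n / th)%R.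
  move=> c cS; apply: Rnot_ge_lt => h; apply: Hng1; exists c; split => //; by left.
have colB : forall c, c \in S -> (INR #|[set d in S | fy d.2 == fy c.2]| < INR n / th)%R.
  move=> c cS; apply: Rnot_ge_lt => h; apply: Hng1; exists c; split => //; by right.
have oppB : forall c, c \in S -> (INR #|[set d in S | opp c d]| < INR n / th)%R.
  move=> c cS; apply: Rnot_ge_lt => h; apply: Hng2; exists c; split => //.
pose g a := #|[set c in S | fx c.1 < a]|.
pose P := fun a => (g a).*2 <= n.
have g0 : g (x1 bx) = 0.
  apply/eqP; rewrite cards_eq0; apply/eqP/setP => c; rewrite !inE inS inboxE.
  apply/negP => /andP[/andP[_ /and4P[h1 _ _ _]] h2]; move: h1; by rewrite leqNgt h2.
have exP : exists i, P i by exists (x1 bx); rewrite /P g0.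
have ubP : forall i, P i -> i <= x2 bx.
  move=> i; rewrite /P; apply: contraTT; rewrite -ltnNge => hi.
  have -> : g i = n.
    rewrite /g /n; apply: eq_card => c; rewrite inE.
    case cS : (c \in S) => //=. move: cS; rewrite inS inboxE => /andP[_ /and4P[_ h _ _]].
    exact: ltn_trans h hi.
  have : 0 < n by []. lia.
case: (ex_maxnP exP ubP) => a0 Pa0 Hmax.
have a0lo : x1 bx <= a0 by apply: Hmax; rewrite /P g0.
have a0hi : a0 <= x2 bx by apply: ubP.
have nP1 : ~~ P a0.+1 by apply/negP => h; have := Hmax _ h; rewrite ltnn.
pose D := [set c in S | a0 < fx c.1].
have cardD : g a0.+1 + #|D| = n.
  rewrite /n -(cardsID [set c | fx c.1 < a0.+1] S) /g /D. congr (_ + _).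
  - apply: eq_card => c. by rewrite !inE.
  - apply: eq_card => c. rewrite !inE ltnS -ltnNge.
    by case: (a0 < fx c.1); case: (c \in S).
have HnS : n < expn 2 k.+2 by [].
pose Row := [set c in S | fx c.1 == a0].
have RowB : (INR #|Row| <= INR n / th)%R.
  case: (set_0Vmem Row) => [R0|[x xR]].
    rewrite R0 cards0 /=; have [h1 _] := inv_th; have := pos_INR n; rewrite /Rdiv; nra.
  have E : Row = [set d in S | fx d.1 == fx x.1].
    move: xR; rewrite inE => /andP[_ /eqP ->] //.
  rewrite E; apply: Rlt_le; apply: rowB; move: xR; rewrite inE => /andP[] //.
have gB : g a0 < expn 2 k.+1 by move: Pa0 HnS; rewrite /P !expnS; lia.
case: (set_0Vmem D) => [D0 | [p pD]].
-
  pose TL : Box := ((x1 bx, a0), (y1 bx, y2 bx)).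
  have sTL : Bset TL \subset [set c in S | fx c.1 < a0].
    apply/subsetP => c; rewrite !inE /TL inboxE !mkE => /andP[cC /and4P[h1 h2 h3 h4]].
    rewrite inS inboxE cC h1 h3 h4 h2 /=. by rewrite (leq_trans h2 a0hi).
  have cTL : #|Bset TL| < expn 2 k.+1 by apply: leq_ltn_trans gB; exact: subset_leq_card.
  have [L1 [R1 P1 S1]] := IH _ cTL.
  have cov : S \subset Bset TL :|: Row.
    apply/subsetP => c cS; have := cS; rewrite inS inboxE => /andP[cC /and4P[h1 h2 h3 h4]].
    rewrite !inE cS /TL inboxE !mkE cC h1 h3 h4 /=.
    case: (ltngtP (fx c.1) a0) => h //=.
    have : c \in D by rewrite inE cS h.
    by rewrite D0 inE.
  have cnt : n <= #|Bset TL| + #|Row| by apply: leq_trans (cardU_le _ _); exact: subset_leq_card.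
  exists L1; split.
  + move=> b bL; have [[h1 h2 h3 h4] h5 h6] := R1 b bL; split => //; split => //.
    exact: leq_trans h2 a0hi.
  + exact: P1.
  + have [hu _] := inv_th. have hn := pos_INR n.
    have h0 : (0 >= 0 * (1 - 3 / th) ^ k)%R by rewrite Rmult_0_l; right.
    have hc : (INR n <= INR #|Bset TL| + 0 + INR #|Row| + 0 + 0)%R.
      rewrite !Rplus_0_r -plus_INR; apply: le_INR; apply/leP; exact: cnt.
    have hz : (0 <= INR n / th)%R by rewrite /Rdiv; nra.
    have hF := fin_step (pow_le _ k (proj1 q_bounds)) S1 h0 hc RowB hz hz.
    rewrite Rplus_0_r in hF. rewrite -eS. exact: hF.
-
  case: (@arg_minnP _ p (fun q => q \in D) (fun q => fy q.2) pD) => q qD qmin.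
  have := qD; rewrite inE => /andP[qS a0q].
  have := qS; rewrite inS inboxE => /andP[qC /and4P[q1 q2 q3 q4]].
  pose TL : Box := ((x1 bx, a0), (y1 bx, fy q.2)).
  pose BR : Box := ((a0.+1, x2 bx), ((fy q.2).+1, y2 bx)).
  have sTL : Bset TL \subset [set c in S | fx c.1 < a0].
    apply/subsetP => c; rewrite !inE /TL inboxE !mkE => /andP[cC /and4P[h1 h2 h3 h4]].
    rewrite inS inboxE cC h1 h3 h2 /= (leq_trans h2 a0hi) /=. by rewrite andbT (ltn_trans h4 q4).
  have sBR : Bset BR \subset D.
    apply/subsetP => c; rewrite !inE /BR inboxE !mkE => /andP[cC /and4P[h1 h2 h3 h4]].
    rewrite inS inboxE cC h1 h2 h4 /= andbT; apply/andP; split.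
    * lia.
    * rewrite andbT; lia.
  have cTL : #|Bset TL| < expn 2 k.+1 by apply: leq_ltn_trans gB; exact: subset_leq_card.
  have cBR : #|Bset BR| < expn 2 k.+1.
    apply: leq_ltn_trans (subset_leq_card sBR) _. move: nP1 cardD HnS; rewrite /P !expnS; lia.
  have [L1 [R1 P1 S1]] := IH _ cTL.
  have [L2 [R2 P2 S2]] := IH _ cBR.
  pose Col := [set d in S | fy d.2 == fy q.2].
  pose TR := [set c in S | (fx c.1 < a0) && (fy q.2 < fy c.2)].
  have sTR : TR \subset [set d in S | opp q d].
    apply/subsetP => c; rewrite !inE /opp => /andP[cS /andP[h1 h2]].
    rewrite cS h2 (ltn_trans h1 a0q) /=; by rewrite orbT.
  have cov : S \subset Bset TL :|: Bset BR :|: Row :|: Col :|: TR.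
    apply/subsetP => c cS; have := cS; rewrite inS inboxE => /andP[cC /and4P[h1 h2 h3 h4]].
    rewrite !inE cS /TL /BR !inboxE !mkE cC h1 h2 h3 h4 /=.
    case: (ltngtP (fx c.1) a0) => ha //=; rewrite ?orbT //;
      case: (ltngtP (fy c.2) (fy q.2)) => hb //=; rewrite ?orbT ?andbT //.
    have : fy q.2 <= fy c.2 by apply: qmin; rewrite inE cS ha.
    by rewrite leqNgt hb.
  have cnt : n <= #|Bset TL| + #|Bset BR| + #|Row| + #|Col| + #|TR|.
    apply: leq_trans (subset_leq_card cov) _.
    apply: leq_trans (cardU_le _ _) _; rewrite leq_add2r.
    apply: leq_trans (cardU_le _ _) _; rewrite leq_add2r.
    apply: leq_trans (cardU_le _ _) _; rewrite leq_add2r.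
    exact: cardU_le.
  exists (L1 ++ L2); split.
  + move=> b; rewrite mem_cat => /orP[] bL.
    * have [[h1 h2 h3 h4] h5 h6] := R1 b bL; split => //; split => //.
      -- exact: leq_trans h2 a0hi.
      -- exact: leq_trans h4 (ltnW q4).
    * have [[h1 h2 h3 h4] h5 h6] := R2 b bL; split => //; split => //.
      -- exact: leq_trans a0lo (ltnW h1).
      -- exact: leq_trans q3 (ltnW h3).
  + rewrite pairwise_cat P1 P2 !andbT; apply/allrelP => b b' bL b'L.
    have [[h1 h2 h3 h4] _ _] := R1 b bL. have [[h1' h2' h3' h4'] _ _] := R2 b' b'L.
    rewrite /sep; apply/andP; split.
    * exact: leq_trans h2 (ltnW h1').
    * exact: leq_trans h4 (ltnW h3').
  + rewrite big_cat plus_INR /= -eS.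
    apply: (@fin_step _ _ _ _ _ _ (INR #|Col|) (INR #|TR|) _ (pow_le _ k (proj1 q_bounds)) S1 S2 _ RowB).
    * rewrite -!plus_INR; apply: le_INR; apply/leP; exact: cnt.
    * apply: Rlt_le; exact: colB.
    * apply: Rle_trans (INR_le_card sTR) _; apply: Rlt_le; exact: oppB.
Qed.

End Abs.

Lemma mem_dt (T : eqType) (X : seq T) a1 a2 x : uniq X ->
  (x \in drop a1 (take a2 X)) = [&& x \in X, a1 <= index x X & index x X < a2].
Proof.
move=> uX.
have ut := take_uniq a2 uX.
have E : (x \in take a2 X) = (x \in take a1 (take a2 X)) || (x \in drop a1 (take a2 X)).
  by rewrite -mem_cat cat_take_drop.
have Dj : x \in take a1 (take a2 X) -> x \in drop a1 (take a2 X) -> False.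
  move=> h1 h2; move: ut; rewrite -{1}(cat_take_drop a1 (take a2 X)) cat_uniq => /and3P[_ hd _].
  by move/hasPn: hd => /(_ x h2); rewrite h1.
case hX : (x \in X); last first.
  apply/negP => /mem_drop/mem_take; by rewrite hX.
move: E Dj; rewrite (in_take _ hX) -take_min (in_take _ hX) /=.
case: (x \in drop a1 (take a2 X)) => E Dj.
- have h : ~~ (index x X < minn a1 a2) by apply/negP => h; exact: (Dj h isT).
  move: E h; rewrite orbT; lia.
- move: E; rewrite orbF; lia.
Qed.

Section Graph.
Variables (T : finType) (e : rel T) (X Y : seq T).
Hypotheses (uX : uniq X) (uY : uniq Y).

Definition fx := fun v => index v X.
Definition fy := fun v => index v Y.
Definition CC := chords e X Y.
Definition conv (b : Box) := (drop (x1 b) (take (x2 b) X), drop (y1 b) (take (y2 b) Y)).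

Lemma chords_conv b : chords e (conv b).1 (conv b).2 = Bset CC fx fy b.
Proof.
apply/setP => c; rewrite !inE /conv /= !mem_dt // inboxE /fx /fy.
case: (c.1 \in X); case: (c.2 \in Y); case: (e c.1 c.2); case: (x1 b <= index c.1 X); case: (index c.1 X < x2 b); case: (y1 b <= index c.2 Y); by case: (index c.2 Y < y2 b).
Qed.

Lemma CC_mem c : c \in CC -> [/\ c.1 \in X, c.2 \in Y & e c.1 c.2].
Proof. by rewrite inE => /and3P[]. Qed.

Lemma Bset_top : Bset CC fx fy ((0, size X), (0, size Y)) = CC.
Proof.
apply/setP => c; rewrite inE inboxE !mkE.
case cC : (c \in CC) => //=; have [h1 h2 _] := CC_mem cC.
by rewrite /fx /fy !index_mem h1 h2.
Qed.

Lemma conv_nonempty b : 0 < #|Bset CC fx fy b| ->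
  subsection X (conv b).1 /\ subsection Y (conv b).2.
Proof.
case/card_gt0P => c; rewrite -chords_conv inE => /and3P[h1 h2 _].
rewrite /subsection; split; apply/andP; split.
- by apply/eqP => h; rewrite h in h1.
- exact: infix_trans (infix_drop _ _) (infix_take _ _).
- by apply/eqP => h; rewrite h in h2.
- exact: infix_trans (infix_drop _ _) (infix_take _ _).
Qed.

Lemma conv_sep b b' : sep b b' ->
  [/\ [disjoint (conv b').1 & (conv b).1], [disjoint (conv b').2 & (conv b).2],
      below_in X (conv b').1 (conv b).1 & below_in Y (conv b').2 (conv b).2].
Proof.
case/andP => hx hy; split.
- rewrite disjoint_has; apply/hasPn => x; rewrite /conv /= !mem_dt // => /and3P[_ h1 _].
  apply/negP => /and3P[_ _ h2]; lia.
- rewrite disjoint_has; apply/hasPn => x; rewrite /conv /= !mem_dt // => /and3P[_ h1 _].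
  apply/negP => /and3P[_ _ h2]; lia.
- apply/allP => a; rewrite /conv /= mem_dt // => /and3P[aX h1 _].
  apply/allP => b0; rewrite mem_dt // => /and3P[bX _ h2].
  rewrite /above aX bX /=; lia.
- apply/allP => a; rewrite /conv /= mem_dt // => /and3P[aX h1 _].
  apply/allP => b0; rewrite mem_dt // => /and3P[bX _ h2].
  rewrite /above aX bX /=; lia.
Qed.

Lemma build (Lf : seq Box) :
  (forall b, b \in Lf -> 0 < #|Bset CC fx fy b|) -> pairwise sep Lf ->
  parallel_collection X Y (map conv (rev Lf)).
Proof.
move=> Hne Hpw; split.
- move=> i; rewrite size_map => hi.
  rewrite (nth_map ((0,0),(0,0))) //; apply: conv_nonempty; apply: Hne.
  by rewrite -mem_rev mem_nth.
- move=> i j hij; rewrite size_map => hj.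
  have hi : i < size (rev Lf) by apply: ltn_trans hij hj.
  rewrite !(nth_map ((0,0),(0,0))) //.
  apply: conv_sep.
  move: hi hj; rewrite size_rev => hi hj.
  rewrite !nth_rev //.
  move/(pairwiseP ((0,0),(0,0))): Hpw => Hpw. apply: Hpw; rewrite -?topredE /=; lia.
Qed.

Lemma BsetP b c : c \in Bset CC fx fy b -> [/\ c.1 \in X, c.2 \in Y & c \in CC].
Proof. rewrite inE => /andP[cC _]; have [h1 h2 _] := CC_mem cC; by split. Qed.

Lemma good1_tr th b : good1 fx fy th (Bset CC fx fy b) ->
  exists v, v \in (conv b).1 ++ (conv b).2 /\
    (INR #|[set c in chords e (conv b).1 (conv b).2 | (c.1 == v) || (c.2 == v)]|
       >= INR #|chords e (conv b).1 (conv b).2| / th)%R.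
Proof.
move=> [c [cB [h|h]]].
- exists c.1; split.
    by rewrite mem_cat; move: cB; rewrite -chords_conv inE => /and3P[-> _ _].
  rewrite chords_conv.
  apply: Rge_trans (Rle_ge _ _ (INR_le_card _)) h.
  apply/subsetP => d /setIdP[dB hd]; apply/setIdP; split => //.
  have [c1 _ _] := BsetP cB. have [d1 _ _] := BsetP dB.
  by rewrite (index_inj c.1 d1 c1 (eqP hd)) eqxx.
- exists c.2; split.
    by rewrite mem_cat; move: cB; rewrite -chords_conv inE => /and3P[_ -> _]; rewrite orbT.
  rewrite chords_conv.
  apply: Rge_trans (Rle_ge _ _ (INR_le_card _)) h.
  apply/subsetP => d /setIdP[dB hd]; apply/setIdP; split => //.
  have [_ c2 _] := BsetP cB. have [_ d2 _] := BsetP dB.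
  by rewrite (index_inj c.2 d2 c2 (eqP hd)) eqxx orbT.
Qed.

Lemma good2_tr th b : good2 fx fy th (Bset CC fx fy b) ->
  exists c, c \in chords e (conv b).1 (conv b).2 /\
    (INR #|[set d in chords e (conv b).1 (conv b).2 | interlace X Y c d]|
       >= INR #|chords e (conv b).1 (conv b).2| / th)%R.
Proof.
move=> [c [cB h]]; exists c; rewrite chords_conv; split => //.
apply: Rge_trans (Rle_ge _ _ (INR_le_card _)) h.
apply/subsetP => d /setIdP[dB hd]; apply/setIdP; split => //.
have [c1 c2 _] := BsetP cB. have [d1 d2 _] := BsetP dB.
move: hd; rewrite /opp /fx /fy /interlace /parallel_chords /above c1 c2 d1 d2 /= => hd.
have n1 : c.1 != d.1 by apply/eqP => E; move: hd; rewrite E; lia.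
have n2 : c.2 != d.2 by apply/eqP => E; move: hd; rewrite E; lia.
rewrite n1 n2 /=; move: hd; lia.
Qed.

End Graph.

From Stdlib Require Import ClassicalEpsilon.

Lemma bernoulli (d : R) k : (0 <= d <= 1)%R -> ((1 - d) ^ k >= 1 - INR k * d)%R.
Proof.
move=> [h0 h1]; elim: k => [|k IH]; first (simpl; lra).
rewrite S_INR [X in (X >= _)%R]/=. have h2 := pos_INR k.
have h3 : (0 <= (1 - d) * ((1 - d) ^ k - (1 - INR k * d)))%R by apply: Rmult_le_pos; lra.
have h4 : (0 <= INR k * (d * d))%R by apply: Rmult_le_pos => //; nra.
nra.
Qed.

Lemma INR_expn2 k : INR (expn 2 k) = (2 ^ k)%R.
Proof.
elim: k => [|k IH] //. rewrite expnS mulnE mult_INR IH /=. by [].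
Qed.

Lemma ln_le' (x y : R) : (0 < x)%R -> (x <= y)%R -> (ln x <= ln y)%R.
Proof.
move=> h0 [h|->]; last lra. left; exact: ln_increasing.
Qed.

Definition gbool (P : Prop) : bool := if excluded_middle_informative P then true else false.
Lemma gboolP (P : Prop) : gbool P -> P.
Proof. rewrite /gbool; by case: excluded_middle_informative. Qed.
Lemma gboolN (P : Prop) : ~~ gbool P -> ~ P.
Proof. rewrite /gbool; by case: excluded_middle_informative. Qed.

Lemma sum_split (Lb : seq Box) (f : Box -> nat) (q : pred Box) :
  \sum_(b <- Lb) f b = \sum_(b <- [seq x <- Lb | q x]) f b + \sum_(b <- [seq x <- Lb | predC q x]) f b.
Proof. by rewrite (bigID q) !big_filter. Qed.

Theorem lemma4p2 (T : finType) (e : rel T)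
  (e_sym : symmetric e) (e_irr : irreflexive e)
  (X Y : seq T) (hX : is_path e X) (hY : is_path e Y)
  (hXY : [disjoint X & Y])
  (hm : 2 <= #|chords e X Y|) :
  exists s : seq (seq T * seq T),
    parallel_collection X Y s /\
    (INR (\sum_(p <- s) #|chords e p.1 p.2|) >= INR #|chords e X Y| / 24)%R /\
    ((forall p, p \in s ->
        exists v, v \in p.1 ++ p.2 /\
          (INR #|[set c in chords e p.1 p.2 | (c.1 == v) || (c.2 == v)]|
             >= INR #|chords e p.1 p.2| / (6 * log2 (INR #|chords e X Y|)))%R)
     \/
     (forall p, p \in s ->
        exists c, c \in chords e p.1 p.2 /\
          (INR #|[set d in chords e p.1 p.2 | interlace X Y c d]|
             >= INR #|chords e p.1 p.2| / (6 * log2 (INR #|chords e X Y|)))%R)).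
Proof.
have uX : uniq X by move: hX; rewrite /is_path; case: (X) => // x p /andP[].
have uY : uniq Y by move: hY; rewrite /is_path; case: (Y) => // x p /andP[].
set m := #|chords e X Y|.
set L := log2 (INR m).
have m0 : 0 < m by apply: leq_trans hm.
set k := trunc_log 2 m.
have hk1 : m < expn 2 k.+1 := trunc_log_ltn m (isT : 1 < 2).
have hk2 : expn 2 k <= m := trunc_logP (isT : 1 < 2) m0.
have k1 : 1 <= k by apply: trunc_log_max.
have ln2 : (0 < ln 2)%R by have := ln_lt_2; lra.
have Lk : (INR k <= L)%R.
  have h1 : (ln (INR (expn 2 k)) <= ln (INR m))%R.
    apply: ln_le'; first by apply: lt_0_INR; apply/ltP; rewrite expn_gt0.
    by apply: le_INR; apply/leP.
  rewrite INR_expn2 ln_pow in h1; last lra.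
  rewrite /L /log2 /Rdiv.
  have h3 : (/ ln 2 > 0)%R by apply: Rinv_0_lt_compat.
  have h4 : (ln 2 * / ln 2 = 1)%R by field; lra.
  have h5 := Rmult_le_compat_r (/ ln 2) _ _ (Rlt_le _ _ h3) h1. rewrite Rmult_assoc h4 Rmult_1_r in h5. exact: h5.
have Hk1 : (1 <= INR k)%R by apply: (le_INR 1); apply/leP.
have L1 : (1 <= L)%R by lra.
set th := (6 * L)%R.
have th3 : (3 <= th)%R by rewrite /th; lra.
have Htop : #|Bset (CC e X Y) (fx X) (fy Y) ((0, size X), (0, size Y))| < expn 2 k.+1.
  by rewrite Bset_top.
have [Lb [R1 P1 S1]] := rec_main th3 Htop.
rewrite Bset_top in S1. change #|CC e X Y| with m in S1.
have Hq : ((1 - 3 / th) ^ k >= 1 / 2)%R.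
  have hd : (0 <= 3 / th <= 1)%R.
    rewrite /th /Rdiv. have hu : (0 < / (6 * L))%R by apply: Rinv_0_lt_compat; lra.
    have he : (6 * L * / (6 * L) = 1)%R by field; lra.
    have hh := Rmult_le_compat_r (/ (6 * L)) 3 (6 * L) (Rlt_le _ _ hu) ltac:(lra).
    rewrite he in hh. lra.
  apply: Rge_trans (bernoulli k hd) _.
  have E : (INR k * (3 / th) = INR k / (2 * L))%R by rewrite /th; field; lra.
  rewrite E. have : (INR k / (2 * L) <= 1 / 2)%R.
    rewrite /Rdiv; have hu : (0 < / (2 * L))%R by apply: Rinv_0_lt_compat; lra.
    have he : (L * / (2 * L) = 1 * / 2)%R by field; lra.
    have hh := Rmult_le_compat_r (/ (2 * L)) (INR k) L (Rlt_le _ _ hu) Lk.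
    rewrite he in hh. exact: hh.
  lra.
have Hsum : (INR (\sum_(b <- Lb) #|Bset (CC e X Y) (fx X) (fy Y) b|) >= INR m / 2)%R.
  have h := Rmult_le_compat_l (INR m) _ _ (pos_INR m) (Rge_le _ _ Hq). rewrite /Rdiv; lra.
pose gb b := gbool (good1 (fx X) (fy Y) th (Bset (CC e X Y) (fx X) (fy Y) b)).
rewrite (sum_split _ _ gb) plus_INR in Hsum.
have sumE : forall Lf, \sum_(p <- [seq conv X Y i | i <- rev Lf]) #|chords e p.1 p.2| =
    \sum_(b <- Lf) #|Bset (CC e X Y) (fx X) (fy Y) b|.
  move=> Lf; rewrite big_map big_rev; apply: eq_bigr => b _; by rewrite chords_conv.
have memLf : forall (q : pred Box) b, b \in [seq x <- Lb | q x] ->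
    [/\ 0 < #|Bset (CC e X Y) (fx X) (fy Y) b|, q b &
      good1 (fx X) (fy Y) th (Bset (CC e X Y) (fx X) (fy Y) b) \/
      good2 (fx X) (fy Y) th (Bset (CC e X Y) (fx X) (fy Y) b)].
  move=> q b; rewrite mem_filter => /andP[qb bL]; have [_ h1 h2] := R1 b bL; by split.
case: (Rle_dec (INR m / 4) (INR (\sum_(i <- [seq x <- Lb | gb x]) #|Bset (CC e X Y) (fx X) (fy Y) i|))) => hc.
- exists (map (conv X Y) (rev [seq x <- Lb | gb x])); split; last split.
  + apply: (build (e := e) uX uY).
      by move=> b /memLf[].
    exact: pairwise_filter.
  + rewrite sumE. apply: Rle_ge; apply: (Rle_trans _ (INR m / 4)); last exact: hc.
    have := pos_INR m; lra.
  + left => p /mapP[b]; rewrite mem_rev => /memLf[_ gbb _] ->.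
    exact: good1_tr uX uY _ _ (gboolP gbb).
- exists (map (conv X Y) (rev [seq x <- Lb | predC gb x])); split; last split.
  + apply: (build (e := e) uX uY).
      by move=> b /memLf[].
    exact: pairwise_filter.
  + rewrite sumE. apply: Rle_ge; apply: (Rle_trans _ (INR m / 4)).
      have := pos_INR m; lra.
    have hc' := Rnot_le_lt _ _ hc. lra.
  + right => p /mapP[b]; rewrite mem_rev => /memLf[_ gbb [g1|g2]] ->.
      by have := gboolN gbb.
    exact: good2_tr uX uY _ _ g2.
Qed.
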